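(* Suppose $u_1$ is cyclically separable. For any Nash equilibrium $(\sigma_0^*,\sigma_1^*,\sigma_2^* )$ and any period-$t$ public history $h^t\in\mathrm{supp}(\mathbb{P}_t)$, the stage strategy $\sigma_1^*(h^t)$ is $u_1$-cyclically monotone.
   Context: Stage game. Three players $0,1,2$ have finite action sets $A_0,A_1,A_2$; $Y_0,Y_1$ are finite signal sets. Player 0 takes $a_0$, generating a signal $y_0\sim\rho_0(\cdot\mid a_0)$ observed only by player 1; players 1 and 2 then simultaneously take $a_1,a_2$, generating a public signal $y_1\sim\rho_1(\cdot\mid a_1,a_2)$. Assume: (i) $\rho_0(y_0\mid a_0)>0$ always; (ii) $\rho_1(y_1\mid a_1,a_2)>0$ implies $\rho_1(y_1\mid a_1,a_2')>0$; (iii) for every $a_2$ the vectors $(\rho_1(\cdot\mid a_1,a_2))_{a_1\in A_1}$ are linearly independent. Stage strategies: $\alpha_0\in\Delta(A_0)$, $\alpha_2\in\Delta(A_2)$, $s_1:Y_0\to\Delta(A_1)$. Payoffs $u_0:A_0\times A_1\to\mathbb{R}$, $u_i:Y_0\times A_1\times A_2\to\mathbb{R}$ extended by expectation; $u_1(\cdot,\alpha_2)$ is $(y_0,a_1)\mapsto\sum_{a_2}\alpha_2(a_2)u_1(y_0,a_1,a_2)$. Repeated game: periods $t=0,1,\dots$; player 1 long-lived with discount factor $\delta\in(0,1)$ and payoff $(1-\delta)\sum_t\delta^tu_1$; new myopic players 0 and 2 each period observe only the public history $h^t\in Y_1^t$. Player 1's type is drawn from a full-support prior on a countable set $\Omega$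 consisting of a rational type $\omega_R$ and commitment types $\omega_{s_1}$ that play $s_1$ every period. In a Nash equilibrium $(\sigma_0^*,\sigma_1^*,\sigma_2^* )$, $\sigma_1^*$ is the rational type's strategy (a map from public histories to stage strategies), and $\mathbb{P}_t$ is the induced distribution over period-$t$ public histories conditional on player 1 being rational. For $u:Y_0\times A_1\to\mathbb{R}$, $S\subset Y_0\times A_1$ is $u$-cyclically monotone if for every finite $\{(x_i,y_i)\}_{i=1}^N\subset S$ (with $y_{N+1}=y_1$), $\sum_iu(x_i,y_i)\ge\sum_iu(x_i,y_{i+1})$. $u_1$ is cyclically separable if any $S$ that is $u_1(\cdot,\alpha_2)$-cyclically monotone for some $\alpha_2$ is so for all $\alpha_2$. A stage strategy $s_1$ is $u_1$-cyclically monotone if $\{(y_0,a_1):a_1\in\mathrm{supp}(s_1(y_0))\}$ is $u_1(\cdot,\alpha_2)$-cyclically monotone for all $\alpha_2$. *)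

(* Defs.v *)
From HB Require Import structures.
From mathcomp Require Import all_boot all_order all_algebra.
From mathcomp Require Import all_classical all_reals all_analysis.
Set Implicit Arguments. Unset Strict Implicit. Unset Printing Implicit Defensive.
Import Order.TTheory GRing.Theory Num.Theory.
Local Open Scope ring_scope.

Section Model.
Variable R : realType.
Variables A0 A1 A2 Y0 Y1 : finType.

Definition is_dist (T : finType) (p : T -> R) :=
  (forall x, 0 <= p x) /\ \sum_(x : T) p x = 1.

Definition is_stage1 (s : Y0 -> A1 -> R) := forall y0, is_dist (s y0).

(** rho0 a0 y0 = rho_0(y0 | a0),  rho1 a1 a2 y1 = rho_1(y1 | a1, a2) *)
Variable rho0 : A0 -> Y0 -> R.
Variable rho1 : A1 -> A2 -> Y1 -> R.

Definition monitoring_assumptions :=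
  [/\ (forall a0, is_dist (rho0 a0)),
      (forall a1 a2, is_dist (rho1 a1 a2)),
      (forall a0 y0, 0 < rho0 a0 y0),
      (forall y1 a1 a2 a2', 0 < rho1 a1 a2 y1 -> 0 < rho1 a1 a2' y1) &
      (forall a2 (c : A1 -> R),
          (forall y1, \sum_(a1 : A1) c a1 * rho1 a1 a2 y1 = 0) ->
          forall a1, c a1 = 0)].

(** cyclic monotonicity of S ⊂ Y0 × A1 w.r.t. u : Y0 -> A1 -> R :
    for every finite list (x_1,y_1),...,(x_N,y_N) in S,
    sum_i u(x_i,y_i) >= sum_i u(x_i,y_{i+1}) with y_{N+1} = y_1. *)
Definition cyc_mono (u : Y0 -> A1 -> R) (S : pred (Y0 * A1)) :=
  forall s : seq (Y0 * A1), all S s ->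
    \sum_(p <- zip (map fst s) (rot 1 (map snd s))) u p.1 p.2
      <= \sum_(p <- s) u p.1 p.2.

Definition u1_at (u1 : Y0 -> A1 -> A2 -> R) (alpha2 : A2 -> R) : Y0 -> A1 -> R :=
  fun y0 a1 => \sum_(a2 : A2) alpha2 a2 * u1 y0 a1 a2.

Definition cyclically_separable (u1 : Y0 -> A1 -> A2 -> R) :=
  forall S : pred (Y0 * A1),
    (exists alpha2, is_dist alpha2 /\ cyc_mono (u1_at u1 alpha2) S) ->
    forall alpha2, is_dist alpha2 -> cyc_mono (u1_at u1 alpha2) S.

Definition stage_support (s : Y0 -> A1 -> R) : pred (Y0 * A1) :=
  fun p => s p.1 p.2 != 0.

Definition stage_cyc_mono (u1 : Y0 -> A1 -> A2 -> R) (s : Y0 -> A1 -> R) :=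
  forall alpha2, is_dist alpha2 -> cyc_mono (u1_at u1 alpha2) (stage_support s).

Definition sig1_prob (alpha0 : A0 -> R) (s : Y0 -> A1 -> R) (alpha2 : A2 -> R)
    (y1 : Y1) : R :=
  \sum_(a0 : A0) alpha0 a0 * \sum_(y0 : Y0) rho0 a0 y0 *
   \sum_(a1 : A1) s y0 a1 * \sum_(a2 : A2) alpha2 a2 * rho1 a1 a2 y1.

Definition stage_pay1 (u1 : Y0 -> A1 -> A2 -> R) (alpha0 : A0 -> R)
    (s : Y0 -> A1 -> R) (alpha2 : A2 -> R) : R :=
  \sum_(a0 : A0) alpha0 a0 * \sum_(y0 : Y0) rho0 a0 y0 *
   \sum_(a1 : A1) s y0 a1 * \sum_(a2 : A2) alpha2 a2 * u1 y0 a1 a2.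

Definition stage_pay0 (u0 : A0 -> A1 -> R) (alpha0 : A0 -> R)
    (s : Y0 -> A1 -> R) : R :=
  \sum_(a0 : A0) alpha0 a0 * \sum_(y0 : Y0) rho0 a0 y0 *
   \sum_(a1 : A1) s y0 a1 * u0 a0 a1.

Definition stage_pay2 (u2 : Y0 -> A1 -> A2 -> R) (alpha0 : A0 -> R)
    (s : Y0 -> A1 -> R) (alpha2 : A2 -> R) : R :=
  \sum_(a0 : A0) alpha0 a0 * \sum_(y0 : Y0) rho0 a0 y0 *
   \sum_(a1 : A1) s y0 a1 * \sum_(a2 : A2) alpha2 a2 * u2 y0 a1 a2.

(** Strategies (maps from public histories, listed chronologically). *)
Definition strat0 := seq Y1 -> A0 -> R.
Definition strat1 := seq Y1 -> Y0 -> A1 -> R.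
Definition strat2 := seq Y1 -> A2 -> R.

Definition is_strat0 (sg : strat0) := forall h, is_dist (sg h).
Definition is_strat1 (sg : strat1) := forall h, is_stage1 (sg h).
Definition is_strat2 (sg : strat2) := forall h, is_dist (sg h).

(** probability of the public history [pre ++ h] given that [pre] occurred *)
Fixpoint hist_prob_from (sg0 : strat0) (sg1 : strat1) (sg2 : strat2)
    (pre h : seq Y1) : R :=
  match h with
  | [::] => 1
  | y :: h' => sig1_prob (sg0 pre) (sg1 pre) (sg2 pre) y *
               hist_prob_from sg0 sg1 sg2 (rcons pre y) h'
  end.

Definition hist_prob sg0 sg1 sg2 (h : seq Y1) : R :=
  hist_prob_from sg0 sg1 sg2 [::] h.

Definition period_pay1 u1 sg0 sg1 sg2 (t : nat) : R :=
  \sum_(h : t.-tuple Y1)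
     hist_prob sg0 sg1 sg2 h * stage_pay1 u1 (sg0 h) (sg1 h) (sg2 h).

Definition disc_pay1 u1 (delta : R) sg0 sg1 sg2 : R :=
  (1 - delta) *
    limn (fun n => \sum_(0 <= t < n) delta ^+ t * period_pay1 u1 sg0 sg1 sg2 t).

(** Types: Omega countable, rational type omR, and each other type omega is
    the commitment type playing [commit omega] in every period. *)
Variable Omega : countType.

Definition type_strat (omR : Omega) (commit : Omega -> Y0 -> A1 -> R)
    (sg1 : strat1) (om : Omega) : strat1 :=
  fun h => if om == omR then sg1 h else commit om.

Definition prior_ok (mu : Omega -> R) :=
  (forall om, 0 < mu om) /\ (\esum_(om in [set: Omega]) (mu om)%:E = 1%E).

Definition types_ok (omR : Omega) (commit : Omega -> Y0 -> A1 -> R) :=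
  (forall om, om != omR -> is_stage1 (commit om)) /\
  {in [pred om | om != omR] &, injective commit}.

(** Unnormalized aggregate behaviour of player 1 at public history h:
    sum_om mu(om) P_om(h) s_om(h)(y0)(a1)  (= P(h) times the posterior-
    weighted stage strategy anticipated by the myopic players). *)
Definition agg_stage mu omR commit sg0 sg1 sg2 (h : seq Y1) : Y0 -> A1 -> R :=
  fun y0 a1 =>
    fine (\esum_(om in [set: Omega])
      (mu om * hist_prob sg0 (type_strat omR commit sg1 om) sg2 h
             * type_strat omR commit sg1 om h y0 a1)%:E).

Definition nash_eq u0 u1 u2 (delta : R) mu omR commit
    (sg0 : strat0) (sg1 : strat1) (sg2 : strat2) :=
  [/\ is_strat0 sg0, is_strat1 sg1, is_strat2 sg2 &
  [/\
   (forall sg1', is_strat1 sg1' ->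
      disc_pay1 u1 delta sg0 sg1' sg2 <= disc_pay1 u1 delta sg0 sg1 sg2),
   (forall h alpha0, is_dist alpha0 ->
      stage_pay0 u0 alpha0 (agg_stage mu omR commit sg0 sg1 sg2 h)
      <= stage_pay0 u0 (sg0 h) (agg_stage mu omR commit sg0 sg1 sg2 h)) &
   (forall h alpha2, is_dist alpha2 ->
      stage_pay2 u2 (sg0 h) (agg_stage mu omR commit sg0 sg1 sg2 h) alpha2
      <= stage_pay2 u2 (sg0 h) (agg_stage mu omR commit sg0 sg1 sg2 h) (sg2 h))]].

End Model.

(* Main.v *)
Require Import Defs.
From HB Require Import structures.
From mathcomp Require Import all_boot all_order all_algebra.
From mathcomp Require Import all_classical all_reals all_analysis.
From mathcomp Require Import ring lra.
Import Order.TTheory GRing.Theory Num.Theory.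
Import numFieldNormedType.Exports.
Local Open Scope classical_set_scope.
Local Open Scope ring_scope.

Lemma L_q (R : realType) (A0 Y0 : finType) (al : A0 -> R) (rho0 : A0 -> Y0 -> R) (F : Y0 -> R) :
 \sum_(a0 : A0) al a0 * \sum_(y0 : Y0) rho0 a0 y0 * F y0 =
 \sum_(y0 : Y0) (\sum_(a0 : A0) al a0 * rho0 a0 y0) * F y0.
Proof.
under eq_bigr do rewrite mulr_sumr.
rewrite exchange_big /=; apply: eq_bigr => y0 _.
rewrite mulr_suml; apply: eq_bigr => a0 _; by rewrite mulrA.
Qed.

Lemma sum_wsum1 (R : realType) (I J : finType) (w : I -> R) (F : I -> J -> R) :
  \sum_(i : I) w i = 1 -> (forall i, \sum_(j : J) F i j = 1) ->
  \sum_(j : J) \sum_(i : I) w i * F i j = 1.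
Proof.
move=> Hw HF; rewrite exchange_big /=.
under eq_bigr => i _ do rewrite -mulr_sumr HF mulr1.
exact: Hw.
Qed.

Lemma wsum_bound (R : realType) (I : finType) (w : I -> R) (F : I -> R) (M : R) :
  (forall i, 0 <= w i) -> \sum_(i : I) w i = 1 -> (forall i, `|F i| <= M) ->
  `|\sum_(i : I) w i * F i| <= M.
Proof.
move=> w0 w1 FM; apply: le_trans (ler_norm_sum _ _ _) _.
apply: (@le_trans _ _ (\sum_(i : I) w i * M)).
  apply: ler_sum => i _; rewrite normrM ger0_norm //; exact: ler_wpM2l.
by rewrite -mulr_suml w1 mul1r.
Qed.

Lemma wsum_ge0 (R : realType) (I : finType) (w : I -> R) (F : I -> R) :
  (forall i, 0 <= w i) -> (forall i, 0 <= F i) -> 0 <= \sum_(i : I) w i * F i.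
Proof. by move=> w0 F0; apply: sumr_ge0 => i _; apply: mulr_ge0. Qed.

Lemma le_sum_single (R : realType) (I : finType) (F : I -> R) (i : I) :
  (forall j, 0 <= F j) -> F i <= \sum_(j : I) F j.
Proof. by move=> F0; rewrite (bigD1 i) //= lerDl sumr_ge0. Qed.

Lemma sum_tuple_cons (R : realType) (T : finType) n (F : n.+1.-tuple T -> R) :
  \sum_(t : n.+1.-tuple T) F t = \sum_(y : T) \sum_(t : n.-tuple T) F [tuple of y :: t].
Proof.
rewrite pair_big /=.
rewrite (reindex (fun p : T * n.-tuple T => [tuple of p.1 :: p.2])) //=.
exists (fun t : n.+1.-tuple T => (thead t, behead_tuple t)).
  by move=> [y t] _ /=; congr pair; apply: val_inj.
by move=> t _; rewrite /= [in RHS](tuple_eta t).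
Qed.

Lemma sum_snd_count (X Y : finType) (l : seq (X * Y)) (x : X) :
  (\sum_(y : Y) count (pred1 (x, y)) l = count (fun p => p.1 == x) l)%N.
Proof.
elim: l => [|a l IH] /=; first by rewrite big1.
rewrite big_split /= IH; congr (_ + _)%N.
case: a => a1 a2 /=.
have [->|ne] := eqVneq a1 x.
  rewrite (bigD1 a2) //= eqxx big1 // => y ny.
  by rewrite xpair_eqE eqxx /= eq_sym (negbTE ny).
by rewrite big1 // => y _; rewrite xpair_eqE (negbTE ne).
Qed.

Lemma sum_fst_count (X Y : finType) (l : seq (X * Y)) (y : Y) :
  (\sum_(x : X) count (pred1 (x, y)) l = count (fun p => p.2 == y) l)%N.
Proof.
elim: l => [|a l IH] /=; first by rewrite big1.
rewrite big_split /= IH; congr (_ + _)%N.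
case: a => a1 a2 /=.
have [->|ne] := eqVneq a2 y.
  rewrite (bigD1 a1) //= eqxx big1 // => x nx.
  by rewrite xpair_eqE eqxx /= andbT eq_sym (negbTE nx).
by rewrite big1 // => x _; rewrite xpair_eqE (negbTE ne) andbF.
Qed.

Lemma sum_count_weight (R : realType) (X Y : finType) (l : seq (X * Y)) (U : X -> Y -> R) :
  \sum_(x : X) \sum_(y : Y) (count (pred1 (x, y)) l)%:R * U x y = \sum_(p <- l) U p.1 p.2.
Proof.
elim: l => [|a l IH] /=.
  by rewrite big_nil big1 // => x _; rewrite big1 // => y _; rewrite mul0r.
rewrite big_cons -IH.
under eq_bigr => x _ do under eq_bigr => y _ do rewrite natrD mulrDl.
under eq_bigr => x _ do rewrite big_split /=.
rewrite big_split /=; congr (_ + _).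
case: a => a1 a2.
rewrite pair_big /= (bigD1 (a1, a2)) //= eqxx mul1r big1 ?addr0 //.
by move=> [p1 p2] /negbTE; rewrite eq_sym /= => ->; rewrite mul0r.
Qed.

Definition Dl (R : realType) (X Y : finType) (l : seq (X * Y)) (x : X) (y : Y) : R :=
  (count (pred1 (x, y)) (zip (map fst l) (rot 1 (map snd l))))%:R
  - (count (pred1 (x, y)) l)%:R.
Arguments Dl R {X Y}.

Lemma Dl_sum_snd (R : realType) (X Y : finType) (l : seq (X * Y)) (x : X) :
  \sum_(y : Y) Dl R l x y = 0.
Proof.
rewrite /Dl sumrB -!natr_sum !sum_snd_count.
have E : forall l' : seq (X * Y), count (fun p => p.1 == x) l' = count (pred1 x) (map fst l').
  by move=> l'; rewrite count_map.
rewrite !E.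
have -> : [seq i.1 | i <- zip [seq i.1 | i <- l] (rot 1 [seq i.2 | i <- l])] = [seq i.1 | i <- l].
  by apply: unzip1_zip; rewrite size_rot !size_map.
by rewrite subrr.
Qed.

Lemma Dl_sum_fst (R : realType) (X Y : finType) (l : seq (X * Y)) (y : Y) :
  \sum_(x : X) Dl R l x y = 0.
Proof.
rewrite /Dl sumrB -!natr_sum !sum_fst_count.
have E : forall l' : seq (X * Y), count (fun p => p.2 == y) l' = count (pred1 y) (map snd l').
  by move=> l'; rewrite count_map.
rewrite !E.
have -> : [seq i.2 | i <- zip [seq i.1 | i <- l] (rot 1 [seq i.2 | i <- l])] = rot 1 [seq i.2 | i <- l].
  by apply: unzip2_zip; rewrite size_rot !size_map.
have Hp : perm_eq (rot 1 [seq i.2 | i <- l]) [seq i.2 | i <- l] by rewrite perm_rot perm_refl.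
by rewrite (permP Hp) subrr.
Qed.

Lemma Dl_weight (R : realType) (X Y : finType) (l : seq (X * Y)) (U : X -> Y -> R) :
  \sum_(x : X) \sum_(y : Y) Dl R l x y * U x y =
  \sum_(p <- zip (map fst l) (rot 1 (map snd l))) U p.1 p.2 - \sum_(p <- l) U p.1 p.2.
Proof.
rewrite -!sum_count_weight -sumrB; apply: eq_bigr => x _.
rewrite -sumrB; apply: eq_bigr => y _; by rewrite /Dl mulrBl.
Qed.

Lemma Dl_ge (R : realType) (X Y : finType) (l : seq (X * Y)) (x : X) (y : Y) :
  - (count (pred1 (x, y)) l)%:R <= Dl R l x y.
Proof. by rewrite /Dl lerBrDl addrC addNr ler0n. Qed.

Lemma pos_lb (R : realType) (T : eqType) (l : seq T) (f : T -> R) :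
  (forall p, p \in l -> 0 < f p) -> exists2 e, 0 < e & forall p, p \in l -> e <= f p.
Proof.
elim: l => [|a l IH] H; first by exists 1 => //.
have [e e0 He] : exists2 e, 0 < e & forall p, p \in l -> e <= f p.
  by apply: IH => p pl; apply: H; rewrite inE pl orbT.
exists (Num.min e (f a)).
  by rewrite lt_min e0 H // inE eqxx.
move=> p; rewrite inE => /orP[/eqP->|pl]; rewrite ge_min ?lexx ?orbT //.
by rewrite He.
Qed.

Lemma hist_eq (R : realType) (A0 A1 A2 Y0 Y1 : finType)
  (rho0 : A0 -> Y0 -> R) (rho1 : A1 -> A2 -> Y1 -> R)
  (sg0 : strat0 R A0 Y1) (sg1 sg1' : strat1 R A1 Y0 Y1) (sg2 : strat2 R A2 Y1) :
  (forall pre y, sig1_prob rho0 rho1 (sg0 pre) (sg1' pre) (sg2 pre) y =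
                 sig1_prob rho0 rho1 (sg0 pre) (sg1 pre) (sg2 pre) y) ->
  forall h pre, hist_prob_from rho0 rho1 sg0 sg1' sg2 pre h =
                hist_prob_from rho0 rho1 sg0 sg1 sg2 pre h.
Proof. by move=> E; elim=> [|y h IH] pre //=; rewrite E IH. Qed.

Lemma sig1_ge0 (R : realType) (A0 A1 A2 Y0 Y1 : finType)
  (rho0 : A0 -> Y0 -> R) (rho1 : A1 -> A2 -> Y1 -> R) al0 s al2 y :
  (forall a0 y0, 0 <= rho0 a0 y0) -> (forall a1 a2 y1, 0 <= rho1 a1 a2 y1) ->
  (forall a0, 0 <= al0 a0) -> (forall y0 a1, 0 <= s y0 a1) -> (forall a2, 0 <= al2 a2) ->
  0 <= sig1_prob rho0 rho1 al0 s al2 y.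
Proof.
move=> r0 r1 h0 h1 h2; rewrite /sig1_prob.
apply: wsum_ge0 => // a0; apply: wsum_ge0 => // y0; apply: wsum_ge0 => // a1.
exact: wsum_ge0.
Qed.

Lemma sig1_sum1 (R : realType) (A0 A1 A2 Y0 Y1 : finType)
  (rho0 : A0 -> Y0 -> R) (rho1 : A1 -> A2 -> Y1 -> R) al0 s al2 :
  (forall a0, \sum_y0 rho0 a0 y0 = 1) -> (forall a1 a2, \sum_y1 rho1 a1 a2 y1 = 1) ->
  \sum_a0 al0 a0 = 1 -> (forall y0, \sum_a1 s y0 a1 = 1) -> \sum_a2 al2 a2 = 1 ->
  \sum_y1 sig1_prob rho0 rho1 al0 s al2 y1 = 1.
Proof.
move=> r0 r1 h0 h1 h2; rewrite /sig1_prob.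
apply: sum_wsum1 => // a0; apply: sum_wsum1 => // y0; apply: sum_wsum1 => // a1.
exact: sum_wsum1.
Qed.

Lemma hist_ge0 (R : realType) (A0 A1 A2 Y0 Y1 : finType)
  (rho0 : A0 -> Y0 -> R) (rho1 : A1 -> A2 -> Y1 -> R)
  (sg0 : strat0 R A0 Y1) (sg1 : strat1 R A1 Y0 Y1) (sg2 : strat2 R A2 Y1) :
  (forall a0 y0, 0 <= rho0 a0 y0) -> (forall a1 a2 y1, 0 <= rho1 a1 a2 y1) ->
  is_strat0 sg0 -> is_strat1 sg1 -> is_strat2 sg2 ->
  forall h pre, 0 <= hist_prob_from rho0 rho1 sg0 sg1 sg2 pre h.
Proof.
move=> r0 r1 s0 s1 s2; elim=> [|y h IH] pre //=.
apply: mulr_ge0 => //; apply: sig1_ge0 => //.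
- by move=> a; case: (s0 pre) => + _; apply.
- by move=> y0 a1; case: (s1 pre y0) => + _; apply.
- by move=> a; case: (s2 pre) => + _; apply.
Qed.

Lemma hist_sum1 (R : realType) (A0 A1 A2 Y0 Y1 : finType)
  (rho0 : A0 -> Y0 -> R) (rho1 : A1 -> A2 -> Y1 -> R)
  (sg0 : strat0 R A0 Y1) (sg1 : strat1 R A1 Y0 Y1) (sg2 : strat2 R A2 Y1) :
  (forall a0, \sum_y0 rho0 a0 y0 = 1) -> (forall a1 a2, \sum_y1 rho1 a1 a2 y1 = 1) ->
  is_strat0 sg0 -> is_strat1 sg1 -> is_strat2 sg2 ->
  forall n pre, \sum_(h : n.-tuple Y1) hist_prob_from rho0 rho1 sg0 sg1 sg2 pre h = 1.
Proof.
move=> r0 r1 s0 s1 s2; elim=> [|n IH] pre.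
  rewrite (eq_bigr (fun _ => 1)); last by move=> t _; rewrite tuple0.
  by rewrite sumr_const card_tuple expn0.
rewrite sum_tuple_cons /=.
under eq_bigr => y _ do rewrite -mulr_sumr IH mulr1.
apply: sig1_sum1 => //.
- by case: (s0 pre).
- by move=> y0; case: (s1 pre y0).
- by case: (s2 pre).
Qed.

Lemma stage_pay1_bound (R : realType) (A0 A1 A2 Y0 : finType)
  (rho0 : A0 -> Y0 -> R) (u1 : Y0 -> A1 -> A2 -> R) al0 s al2 (M : R) :
  (forall a0, is_dist (rho0 a0)) -> is_dist al0 -> is_stage1 s -> is_dist al2 ->
  (forall y0 a1 a2, `|u1 y0 a1 a2| <= M) ->
  `|stage_pay1 rho0 u1 al0 s al2| <= M.
Proof.
move=> r0 [h0 h0'] h1 [h2 h2'] uM; rewrite /stage_pay1.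
apply: wsum_bound => // a0; case: (r0 a0) => r0a r0a'.
apply: wsum_bound => // y0; case: (h1 y0) => h1a h1a'.
apply: wsum_bound => // a1; exact: wsum_bound.
Qed.

Lemma lim_ev_shift (R : realType) (S S' : nat -> R) (c : R) (t : nat) :
  cvgn S -> (forall n, (t < n)%N -> S' n = S n + c) -> limn S' = limn S + c.
Proof.
move=> cS eq.
have ev : \forall n \near \oo, (S' \- S) n = c.
  near=> n. rewrite /= eq; last by near: n; exact: nbhs_infty_gt.
  by rewrite addrAC subrr add0r.
have -> : S' = S \+ (S' \- S) by apply/funext => n /=; rewrite addrC subrK.
have cg : (S' \- S) @ \oo --> c by exact: cvg_near_cst.
rewrite (limD cS (cvgP _ cg)).
by rewrite (cvg_lim _ cg).
Unshelve. all: by end_near.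
Qed.

Lemma cvg_disc (R : realType) (d M : R) (x : nat -> R) : 0 <= d < 1 ->
  (forall n, `|x n| <= M) -> cvgn (series (fun n => d ^+ n * x n)).
Proof.
move=> /andP[d0 d1] xM.
apply: (@normed_cvg R R^o).
have M0 : 0 <= M by exact: le_trans (xM 0%N).
apply: (@series_le_cvg R _ (geometric M d)).
- by move=> n; rewrite /= normr_ge0.
- by move=> n; rewrite /geometric /= mulr_ge0 ?exprn_ge0.
- move=> n; rewrite /geometric /= normrM ger0_norm ?exprn_ge0 // mulrC ler_wpM2r ?exprn_ge0 //.
- by apply: is_cvg_geometric_series; rewrite ger0_norm.
Qed.

Lemma u1_bound (R : realType) (A1 A2 Y0 : finType) (u1 : Y0 -> A1 -> A2 -> R) :
  exists M, forall y0 a1 a2, `|u1 y0 a1 a2| <= M.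
Proof.
exists (\sum_y0 \sum_a1 \sum_a2 `|u1 y0 a1 a2|) => y0 a1 a2.
have h1 : `|u1 y0 a1 a2| <= \sum_a2 `|u1 y0 a1 a2| by apply: le_sum_single.
have h2 : \sum_a2 `|u1 y0 a1 a2| <= \sum_a1 \sum_a2 `|u1 y0 a1 a2|.
  by apply: (@le_sum_single _ _ (fun a => \sum_a2 `|u1 y0 a a2|) a1) => a; apply: sumr_ge0.
have h3 : \sum_a1 \sum_a2 `|u1 y0 a1 a2| <= \sum_y0 \sum_a1 \sum_a2 `|u1 y0 a1 a2|.
  apply: (@le_sum_single _ _ (fun y => \sum_a1 \sum_a2 `|u1 y a1 a2|) y0) => y.
  by apply: sumr_ge0 => ? _; apply: sumr_ge0.
by apply: le_trans h1 (le_trans h2 h3).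
Qed.

Lemma period_bound (R : realType) (A0 A1 A2 Y0 Y1 : finType)
  (rho0 : A0 -> Y0 -> R) (rho1 : A1 -> A2 -> Y1 -> R) (u1 : Y0 -> A1 -> A2 -> R)
  (sg0 : strat0 R A0 Y1) (sg1 : strat1 R A1 Y0 Y1) (sg2 : strat2 R A2 Y1) (M : R) :
  (forall a0, is_dist (rho0 a0)) -> (forall a1 a2, is_dist (rho1 a1 a2)) ->
  is_strat0 sg0 -> is_strat1 sg1 -> is_strat2 sg2 ->
  (forall y0 a1 a2, `|u1 y0 a1 a2| <= M) ->
  forall n, `|period_pay1 rho0 rho1 u1 sg0 sg1 sg2 n| <= M.
Proof.
move=> r0 r1 s0 s1 s2 uM n; rewrite /period_pay1.
apply: wsum_bound.
- move=> h; apply: hist_ge0 => //.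
  + by move=> a y; case: (r0 a) => + _; apply.
  + by move=> a b y; case: (r1 a b) => + _; apply.
- apply: hist_sum1 => //.
  + by move=> a; case: (r0 a).
  + by move=> a b; case: (r1 a b).
- by move=> h; apply: stage_pay1_bound.
Qed.

Lemma disc_dev (R : realType) (A0 A1 A2 Y0 Y1 : finType)
  (rho0 : A0 -> Y0 -> R) (rho1 : A1 -> A2 -> Y1 -> R) (u1 : Y0 -> A1 -> A2 -> R)
  (sg0 : strat0 R A0 Y1) (sg1 sg1' : strat1 R A1 Y0 Y1) (sg2 : strat2 R A2 Y1)
  (delta : R) (t : nat) (h : t.-tuple Y1) :
  (forall a0, is_dist (rho0 a0)) -> (forall a1 a2, is_dist (rho1 a1 a2)) ->
  is_strat0 sg0 -> is_strat1 sg1 -> is_strat2 sg2 -> 0 <= delta < 1 ->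
  (forall pre y, sig1_prob rho0 rho1 (sg0 pre) (sg1' pre) (sg2 pre) y =
                 sig1_prob rho0 rho1 (sg0 pre) (sg1 pre) (sg2 pre) y) ->
  (forall pre, pre != (h : seq Y1) -> sg1' pre = sg1 pre) ->
  disc_pay1 rho0 rho1 u1 delta sg0 sg1' sg2 =
  disc_pay1 rho0 rho1 u1 delta sg0 sg1 sg2 +
  (1 - delta) * (delta ^+ t * (hist_prob rho0 rho1 sg0 sg1 sg2 h *
    (stage_pay1 rho0 u1 (sg0 h) (sg1' h) (sg2 h) - stage_pay1 rho0 u1 (sg0 h) (sg1 h) (sg2 h)))).
Proof.
move=> r0 r1 s0 s1 s2 d01 Hsig Hpay.
set c := hist_prob _ _ _ _ _ _ * _.
have Hper : forall n, period_pay1 rho0 rho1 u1 sg0 sg1' sg2 n =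
   period_pay1 rho0 rho1 u1 sg0 sg1 sg2 n + (if n == t then c else 0).
  move=> n; rewrite /period_pay1 /hist_prob.
  under eq_bigr => h' _ do rewrite (@hist_eq _ _ _ _ _ _ rho0 rho1 sg0 sg1 sg1' sg2 Hsig).
  have [E|NE] := eqVneq n t.
    subst n; rewrite (bigD1 h) //= [in X in _ = X + _](bigD1 h) //=.
    rewrite (eq_bigr (fun h' : t.-tuple Y1 => hist_prob_from rho0 rho1 sg0 sg1 sg2 [::] h' *
       stage_pay1 rho0 u1 (sg0 h') (sg1 h') (sg2 h'))); last first.
      by move=> h' nh; rewrite Hpay.
    rewrite /c /hist_prob; ring.
  rewrite addr0; apply: eq_bigr => h' _; rewrite Hpay //.
  apply/eqP => E; have := congr1 size E; rewrite !size_tuple => E'.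
  by rewrite E' eqxx in NE.
have [M uM] := @u1_bound _ _ _ _ u1.
have cS := @cvg_disc _ delta M _ d01 (@period_bound _ _ _ _ _ _ rho0 rho1 u1 sg0 sg1 sg2 M r0 r1 s0 s1 s2 uM).
rewrite /disc_pay1 -mulrDr; congr (_ * _).
apply: (@lim_ev_shift _ _ _ _ t cS) => N tN /=.
under eq_bigr => k _ do rewrite Hper mulrDr.
rewrite big_split /=; congr (_ + _).
rewrite big_mkord (bigD1 (Ordinal tN)) //= eqxx big1 ?addr0 //.
move=> k nk; case: eqP => kt; last by rewrite mulr0.
by rewrite -(inj_eq val_inj) /= kt eqxx in nk.
Qed.

Lemma pert_sum (R : realType) (Y0 A1 : finType) (q : Y0 -> R) (s s' D F : Y0 -> A1 -> R) (e : R) :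
  (forall y, q y != 0) -> (forall y a, s' y a = s y a + e / q y * D y a) ->
  \sum_y0 q y0 * \sum_a1 s' y0 a1 * F y0 a1 =
  \sum_y0 q y0 * \sum_a1 s y0 a1 * F y0 a1 + e * \sum_y0 \sum_a1 D y0 a1 * F y0 a1.
Proof.
move=> q0 Hs; rewrite mulr_sumr -big_split /=; apply: eq_bigr => y _.
rewrite !mulr_sumr -big_split /=; apply: eq_bigr => a _.
rewrite Hs; have := q0 y; move: (q y) => z z0; by field.
Qed.

Lemma q_pos (R : realType) (A0 Y0 : finType) (al : A0 -> R) (rho0 : A0 -> Y0 -> R) (y : Y0) :
  is_dist al -> (forall a0, 0 < rho0 a0 y) -> 0 < \sum_a0 al a0 * rho0 a0 y.
Proof.
move=> [al0 al1] rp; rewrite lt_def sumr_ge0 ?andbT; last first.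
  by move=> a _; rewrite mulr_ge0 // ltW.
apply/negP => /eqP/psumr_eq0P H.
have : \sum_a0 al a0 = 0.
  apply: big1 => a _; have := H (fun i _ => mulr_ge0 (al0 i) (ltW (rp i))) a isT.
  by move/eqP; rewrite mulf_eq0 (gt_eqF (rp a)) orbF => /eqP.
by rewrite al1 => /eqP; rewrite oner_eq0.
Qed.

Theorem lemma5 (R : realType) (A0 A1 A2 Y0 Y1 : finType)
    (rho0 : A0 -> Y0 -> R) (rho1 : A1 -> A2 -> Y1 -> R)
    (u0 : A0 -> A1 -> R) (u1 u2 : Y0 -> A1 -> A2 -> R)
    (delta : R) (Omega : countType) (omR : Omega)
    (commit : Omega -> Y0 -> A1 -> R) (mu : Omega -> R)
    (sg0 : strat0 R A0 Y1) (sg1 : strat1 R A1 Y0 Y1) (sg2 : strat2 R A2 Y1) :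
  monitoring_assumptions rho0 rho1 ->
  0 < delta < 1 ->
  types_ok omR commit ->
  prior_ok mu ->
  cyclically_separable u1 ->
  nash_eq rho0 rho1 u0 u1 u2 delta mu omR commit sg0 sg1 sg2 ->
  forall (t : nat) (h : t.-tuple Y1),
    0 < hist_prob rho0 rho1 sg0 sg1 sg2 h ->
    stage_cyc_mono u1 (sg1 h).
Proof.
move=> [r0 r1 rpos _ _] /andP[d0 d1] _ _ csep [s0 s1 s2 [dev _ _]] t h hpos.
move=> al2 dal2; apply: (csep _ _ al2 dal2); exists (sg2 h); split; first exact: s2.
move=> l Hall; rewrite leNgt; apply/negP => Hlt.
set s := sg1 h.
set q := fun y0 => \sum_a0 sg0 h a0 * rho0 a0 y0.
have qpos : forall y0, 0 < q y0 by move=> y0; apply: q_pos.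
have spos : forall p, p \in l -> 0 < s p.1 p.2 * q p.1.
  move=> p pl; rewrite mulr_gt0 //; move/allP: Hall => /(_ p pl).
  rewrite /stage_support /= => ne; rewrite lt_def ne /=.
  by case: (s1 h p.1) => + _; apply.
have [e e0 He] := @pos_lb _ _ l (fun p => s p.1 p.2 * q p.1) spos.
set eps := e / ((size l)%:R + 1).
have eps0 : 0 < eps by rewrite divr_gt0 // ltr_wpDl.
pose s' := fun y0 a1 => s y0 a1 + eps / q y0 * Dl R l y0 a1.
pose sg1' : strat1 R A1 Y0 Y1 := fun pre => if pre == (h : seq Y1) then s' else sg1 pre.
have Hs' : forall y a, s' y a = s y a + eps / q y * Dl R l y a by [].
have qne0 : forall y, q y != 0 by move=> y; rewrite gt_eqF.
have s'ok : is_stage1 s'.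
  move=> y0; split; last first.
    rewrite /s' big_split /= -mulr_sumr Dl_sum_snd mulr0 addr0.
    by case: (s1 h y0).
  move=> a1; rewrite /s'.
  have sge : 0 <= s y0 a1 by case: (s1 h y0) => + _; apply.
  set c := count (pred1 (y0, a1)) l.
  have H1 : s y0 a1 - eps / q y0 * c%:R <= s y0 a1 + eps / q y0 * Dl R l y0 a1.
    rewrite lerD2l -mulrN ler_wpM2l ?Dl_ge //.
    by rewrite divr_ge0 // ltW.
  apply: le_trans H1; rewrite subr_ge0.
  have [c0|cpos] := eqVneq c 0%N; first by rewrite c0 mulr0.
  have yl : (y0, a1) \in l by rewrite -has_pred1 has_count lt0n.
  have Hc : eps * c%:R <= e.
    rewrite /eps mulrAC ler_pdivrMr ?ltr_wpDl // ler_wpM2l ?ltW //.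
    by rewrite natr1 ltr_nat ltnS count_size.
  rewrite mulrAC ler_pdivrMr //; apply: le_trans Hc _.
  exact: He yl.
have strat' : is_strat1 sg1'.
  by move=> pre; rewrite /sg1'; case: ifP => _ //.
have Hpay : forall pre, pre != (h : seq Y1) -> sg1' pre = sg1 pre.
  by move=> pre /negbTE ne; rewrite /sg1' ne.
have Hsig : forall pre y, sig1_prob rho0 rho1 (sg0 pre) (sg1' pre) (sg2 pre) y =
                 sig1_prob rho0 rho1 (sg0 pre) (sg1 pre) (sg2 pre) y.
  move=> pre y; have [E|NE] := eqVneq pre (h : seq Y1); last by rewrite Hpay.
  rewrite /sg1' E eqxx /sig1_prob [LHS]L_q [RHS]L_q.
  rewrite (@pert_sum _ _ _ q s s' (Dl R l) (fun _ a1 => \sum_a2 sg2 h a2 * rho1 a1 a2 y) eps qne0 Hs').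
  rewrite exchange_big /= [X in eps * X]big1 ?mulr0 ?addr0 //.
  by move=> a _; rewrite -mulr_suml Dl_sum_fst mul0r.
have Hgain : 0 < stage_pay1 rho0 u1 (sg0 h) (sg1' h) (sg2 h) - stage_pay1 rho0 u1 (sg0 h) (sg1 h) (sg2 h).
  rewrite /sg1' eqxx /stage_pay1 [X in X - _]L_q [X in _ - X]L_q.
  rewrite (@pert_sum _ _ _ q s s' (Dl R l) (u1_at u1 (sg2 h)) eps qne0 Hs').
  rewrite addrAC subrr add0r Dl_weight mulr_gt0 // subr_gt0.
  exact: Hlt.
have r0' : forall a0, 0 <= 0 by [].
have d01 : 0 <= delta < 1 by rewrite (ltW d0) d1.
have E := @disc_dev _ _ _ _ _ _ rho0 rho1 u1 sg0 sg1 sg1' sg2 delta t h r0 r1 s0 s1 s2 d01 Hsig Hpay.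
have := dev sg1' strat'; rewrite E gerDl.
rewrite leNgt => /negP; apply.
by rewrite !mulr_gt0 // ?subr_gt0 // exprn_gt0.
Qed.
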